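(* Let $\phi:\mathbb{R}^d\to\mathbb{R}^d$ be a bi-Lipschitz homeomorphism preserving Lebesgue measure, let $K_\phi$ and $\rho_a$ be as in the context, and fix $a\in[0,1]$. Then for every ball $B=B(x_0,r)$ in $\mathbb{R}^d$ (with radius $r_B=r$) there exists a collection $(O_k)_k$ of balls in $\mathbb{R}^d$, with radii $r_{O_k}$, such that: (i) the collection of doubled balls $(2O_k)_k$ is a bounded covering of $\phi(B)$, i.e. $\phi(B)\subset\bigcup_k 2O_k$ and every point of $\mathbb{R}^d$ belongs to at most $N$ of the balls $2O_k$, with $N$ depending only on $d$; (ii) the balls $(O_k)_k$ are pairwise disjoint; (iii) for every $p\in[1,\infty)$, $$\left(\frac{1}{|B|}\sum_k |O_k|\,\rho_a\!\left(\frac{r_B}{r_{O_k}}\right)^p\right)^{1/p}\le C\,\rho_a(K_\phi),$$ where $C$ depends only on the dimension $d$, on $a$ and on $p$ (not on $B$ or $\phi$).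
   Context: For a bi-Lipschitz homeomorphism $\phi$ of $\mathbb{R}^d$, $K_\phi:=\sup_{x\neq y}\left(\frac{|\phi(x)-\phi(y)|}{|x-y|}+\frac{|x-y|}{|\phi(x)-\phi(y)|}\right)$. ''Preserving Lebesgue measure'' means $|\phi(A)|=|A|$ for all measurable $A$. For $a\in[0,1]$, $\rho_a:[0,\infty)\to\mathbb{R}$ is defined by $\rho_a(r)=r^a$ if $a>0$ and $\rho_0(r)=\log(r)$. For a ball $O=B(x,s)$, $2O$ denotes $B(x,2s)$. *)

(* Defs.v *)
From HB Require Import structures.
From mathcomp Require Import all_boot all_order all_algebra.
From mathcomp Require Import all_classical all_reals all_analysis.
Set Implicit Arguments. Unset Strict Implicit. Unset Printing Implicit Defensive.
Import Order.TTheory GRing.Theory Num.Theory.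
Local Open Scope classical_set_scope.
Local Open Scope ring_scope.

Section Defs.
Variables (R : realType) (d : nat).
Notation V := 'rV[R]_d.

Definition enorm (x : V) : R := Num.sqrt (\sum_(i < d) (x ord0 i) ^+ 2).

Definition eball (x : V) (s : R) : set V := [set y | enorm (y - x) < s].

Definition box (a b : V) : set V := [set y | forall i, a ord0 i <= y ord0 i < b ord0 i].
Definition boxvol (a b : V) : R := \prod_(i < d) Num.max (b ord0 i - a ord0 i) 0.

Definition leb_outer (A : set V) : \bar R :=
  ereal_inf [set s | exists (a b : nat -> V),
    A `<=` \bigcup_n box (a n) (b n) /\
    s = (\sum_(0 <= n <oo) (boxvol (a n) (b n))%:E)%E].

Definition leb_measurable (A : set V) : Prop :=
  forall E : set V, leb_outer E = (leb_outer (E `&` A) + leb_outer (E `&` ~` A))%E.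

Definition preserves_lebesgue (phi : V -> V) : Prop :=
  forall A, leb_measurable A -> leb_outer (phi @` A) = leb_outer A.

Definition bilipschitz (phi : V -> V) : Prop :=
  exists L : R, 0 < L /\ forall x y,
    enorm (phi x - phi y) <= L * enorm (x - y) /\ enorm (x - y) <= L * enorm (phi x - phi y).

Definition Kphi (phi : V -> V) : R :=
  sup [set t | exists x y, x != y /\
     t = enorm (phi x - phi y) / enorm (x - y) + enorm (x - y) / enorm (phi x - phi y)].
End Defs.

Definition rho {R : realType} (a r : R) : R := if a == 0 then ln r else powR r a.

(* Main.v *)
Require Import Defs.
From HB Require Import structures.
From mathcomp Require Import all_boot all_order all_algebra.
From mathcomp Require Import all_classical all_reals all_analysis.
Import Order.TTheory GRing.Theory Num.Theory.
Local Open Scope classical_set_scope.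
Local Open Scope ring_scope.
From mathcomp Require Import ring lra.


Section PartA.
Variables (R : realType) (d : nat).
Hypothesis hd : (0 < d)%N.
Notation V := 'rV[R]_d.

Lemma sumsq_ge0 (x : V) : 0 <= \sum_(i < d) (x ord0 i) ^+ 2.
Proof. by apply: sumr_ge0 => i _; exact: sqr_ge0. Qed.

Lemma enorm_ge0 (x : V) : 0 <= enorm x.
Proof. exact: sqrtr_ge0. Qed.

Lemma enorm_sq (x : V) : enorm x ^+ 2 = \sum_(i < d) (x ord0 i) ^+ 2.
Proof. by rewrite /enorm sqr_sqrtr // sumsq_ge0. Qed.

Lemma enorm_ltP (x : V) s : 0 <= s -> (enorm x < s) = (\sum_(i < d) (x ord0 i) ^+ 2 < s ^+ 2).
Proof.
move=> s0; rewrite -(ltr_pXn2r (n:=2)) //; last by rewrite nnegrE enorm_ge0.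
by rewrite enorm_sq.
Qed.

Lemma enorm_leP (x : V) s : 0 <= s -> (enorm x <= s) = (\sum_(i < d) (x ord0 i) ^+ 2 <= s ^+ 2).
Proof.
move=> s0; rewrite -(ler_pXn2r (n:=2)) //; last by rewrite nnegrE enorm_ge0.
by rewrite enorm_sq.
Qed.

Lemma enormN (x : V) : enorm (- x) = enorm x.
Proof. by rewrite /enorm; congr Num.sqrt; apply: eq_bigr => i _; rewrite mxE sqrrN. Qed.

Lemma enormB (x y : V) : enorm (x - y) = enorm (y - x).
Proof. by rewrite -enormN opprB. Qed.

Lemma enorm0 : enorm (0 : V) = 0.
Proof. by rewrite /enorm big1 ?sqrtr0 // => i _; rewrite mxE expr0n. Qed.

Lemma coord_le (x : V) i : `|x ord0 i| <= enorm x.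
Proof.
rewrite -sqrtr_sqr /enorm ler_sqrt ?sumsq_ge0 //.
rewrite (bigD1 i) //= lerDl; apply: sumr_ge0 => j _; exact: sqr_ge0.
Qed.

Lemma enorm_eq0 (x : V) : enorm x = 0 -> x = 0.
Proof.
move=> h; apply/rowP => i; rewrite mxE; apply/eqP; rewrite -normr_le0 -h.
exact: coord_le.
Qed.

Lemma enormD (x y : V) : enorm (x + y) <= enorm x + enorm y.
Proof.
set A := \sum_(i < d) (x ord0 i) ^+ 2.
set B := \sum_(i < d) (y ord0 i) ^+ 2.
set P := \sum_(i < d) (x ord0 i * y ord0 i).
have hP : P <= enorm x * enorm y.
  have a2 : enorm x ^+ 2 = A by rewrite enorm_sq.
  have b2 : enorm y ^+ 2 = B by rewrite enorm_sq.
  have key : 0 <= enorm y ^+ 2 * A - 2 * (enorm x * enorm y) * P + enorm x ^+ 2 * B.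
    have -> : enorm y ^+ 2 * A - 2 * (enorm x * enorm y) * P + enorm x ^+ 2 * B =
       \sum_(i < d) (enorm y * x ord0 i - enorm x * y ord0 i) ^+ 2.
      rewrite /A /B /P !mulr_sumr -sumrN -!big_split /=; apply: eq_bigr => i _.
      by rewrite sqrrB !exprMn; ring.
    by apply: sumr_ge0 => i _; exact: sqr_ge0.
  rewrite a2 b2 in key.
  have ex0 := enorm_ge0 x; have ey0 := enorm_ge0 y.
  have [ez|nz] := boolP (enorm x * enorm y == 0).
    move: ez; rewrite mulf_eq0 => /orP[] /eqP /enorm_eq0 hz;
      (rewrite /P big1; [exact: mulr_ge0| move=> i _; rewrite hz mxE ?mul0r ?mulr0 //]).
  have pos : 0 < enorm x * enorm y by rewrite lt_def nz mulr_ge0.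
  rewrite -(ler_pM2l pos); rewrite -subr_ge0.
  have e : enorm x * enorm y * (enorm x * enorm y) - enorm x * enorm y * P =
    (B * A - 2 * (enorm x * enorm y) * P + A * B) / 2.
    by rewrite -a2 -b2; field; rewrite ?pnatr_eq0.
  rewrite e; apply: divr_ge0 => //.
rewrite enorm_leP ?addr_ge0 ?enorm_ge0 //.
have -> : \sum_(i < d) ((x + y) ord0 i) ^+ 2 = A + 2 * P + B.
  rewrite /A /B /P mulr_sumr -!big_split /=; apply: eq_bigr => i _.
  by rewrite mxE sqrrD; ring.
rewrite sqrrD !enorm_sq -/A -/B mulr2n.
move: hP; set q := enorm x * enorm y; lra.
Qed.

Lemma enorm_tri (x y z : V) : enorm (x - z) <= enorm (x - y) + enorm (y - z).
Proof. by rewrite (_ : x - z = (x - y) + (y - z)) ?enormD // addrA subrK. Qed.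

Lemma small_coords (x : V) (h : R) : 0 < h -> (forall i, `|x ord0 i| < h) -> enorm x < d%:R * h.
Proof.
move=> h0 hx; rewrite enorm_ltP ?mulr_ge0 ?ler0n ?ltW //.
apply: (@lt_le_trans _ _ (\sum_(i < d) h ^+ 2)).
  rewrite [X in X < _](bigD1 (Ordinal hd)) //= [X in _ < X](bigD1 (Ordinal hd)) //=.
  apply: ltr_leD.
    by rewrite -real_normK ?num_real // ltr_pXn2r ?nnegrE ?normr_ge0 ?ltW.
  apply: ler_sum => i _; rewrite -real_normK ?num_real // ler_pXn2r ?nnegrE ?normr_ge0 ?ltW //.
rewrite sumr_const card_ord -[h ^+ 2 *+ d]mulr_natl exprMn ler_pM2r ?exprn_gt0 //.
rewrite -natrX ler_nat; move: hd; case: (d) => // n _; rewrite expnS leq_pmulr //.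
Qed.

End PartA.


Section PartB.
Variables (R : realType) (d : nat).
Hypothesis hd : (0 < d)%N.
Notation V := 'rV[R]_d.
Notation m := (@leb_outer R d).

Lemma boxvol_ge0 (a b : V) : 0 <= boxvol a b.
Proof. by apply: prodr_ge0 => i _; rewrite le_max lexx orbT. Qed.

Lemma m_le (A : set V) (a b : nat -> V) : A `<=` \bigcup_n box (a n) (b n) ->
  (m A <= \sum_(0 <= n <oo) (boxvol (a n) (b n))%:E)%E.
Proof. by move=> hA; apply: ereal_inf_lbound; exists a, b. Qed.

Lemma m_lb (A : set V) (x : \bar R) :
  (forall a b : nat -> V, A `<=` \bigcup_n box (a n) (b n) ->
     (x <= \sum_(0 <= n <oo) (boxvol (a n) (b n))%:E)%E) -> (x <= m A)%E.
Proof. by move=> h; apply: le_ereal_inf_tmp => s [a [b [hA ->]]]; exact: h. Qed.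

Lemma m_ge0 (A : set V) : (0 <= m A)%E.
Proof.
apply: m_lb => a b _; apply: nneseries_ge0 => n _ _; rewrite lee_fin; exact: boxvol_ge0.
Qed.

Lemma m_mono (A B : set V) : A `<=` B -> (m A <= m B)%E.
Proof. by move=> AB; apply: m_lb => a b hB; apply: m_le; exact: subset_trans hB. Qed.

Lemma boxvol00 : boxvol (0 : V) 0 = 0.
Proof.
rewrite /boxvol (bigD1 (Ordinal hd)) //= mxE subrr maxxx mul0r //.
Qed.

Lemma m0 : m set0 = 0%E.
Proof.
apply/le_anti; rewrite m_ge0 andbT.
apply: le_trans (@m_le set0 (fun _ => 0) (fun _ => 0) _) _ => //.
by rewrite boxvol00 eseries0.
Qed.

Local Open Scope ereal_scope.
Lemma series_ub (f : nat -> \bar R) (x : \bar R) : (forall n, 0 <= f n) ->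
  (forall N, \sum_(0 <= i < N) f i <= x) -> \sum_(0 <= i <oo) f i <= x.
Proof.
move=> f0 h; apply: lime_le; first exact: is_cvg_nneseries.
exact: nearW.
Qed.

Lemma interleave_le (g h : nat -> \bar R) : (forall n, 0 <= g n) -> (forall n, 0 <= h n) ->
  \sum_(0 <= i <oo) (if odd i then h i./2 else g i./2) <=
  \sum_(0 <= i <oo) g i + \sum_(0 <= i <oo) h i.
Proof.
move=> g0 h0; pose f := fun i => if odd i then h i./2 else g i./2.
change (\sum_(0 <= i <oo) f i <= \sum_(0 <= i <oo) g i + \sum_(0 <= i <oo) h i).
have f0 : forall n, 0 <= f n by move=> n; rewrite /f; case: ifP.
apply: series_ub => // N.
have eq2 : forall M, \sum_(0 <= i < M.*2) f i = \sum_(0 <= i < M) g i + \sum_(0 <= i < M) h i.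
  elim=> [|M IH]; first by rewrite !big_geq // adde0.
  rewrite doubleS !big_nat_recr //= IH /f /= odd_double /=.
  rewrite uphalf_double doubleK.
  by rewrite -!addeA; congr (_ + _); rewrite addeCA.
apply: le_trans (_ : \sum_(0 <= i < N.*2) f i <= _).
  apply: lee_sum_nneg_natr => //; by rewrite -addnn leq_addr.
rewrite eq2; apply: leeD; exact: nneseries_lim_ge.
Qed.
Lemma m_subadd (A B : set V) : m (A `|` B) <= m A + m B.
Proof.
have [fA|nfA] := boolP (m A \is a fin_num); last first.
  have : m A = +oo by move: nfA; rewrite ge0_fin_numE ?m_ge0 // -leNgt leye_eq => /eqP.
  by move=> ->; rewrite addye ?leey // gt_eqF // (lt_le_trans _ (m_ge0 B)) ?ltNy0.
have [fB|nfB] := boolP (m B \is a fin_num); last first.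
  have : m B = +oo by move: nfB; rewrite ge0_fin_numE ?m_ge0 // -leNgt leye_eq => /eqP.
  by move=> ->; rewrite addey ?leey // gt_eqF // (lt_le_trans _ (m_ge0 A)) ?ltNy0.
apply/lee_addgt0Pr => e e0.
have e20 : (0 < e / 2)%R by rewrite divr_gt0.
have [_ [aA [bA [hA ->]]] hSA] := lb_ereal_inf_adherent e20 fA.
have [_ [aB [bB [hB ->]]] hSB] := lb_ereal_inf_adherent e20 fB.
pose a := fun i => if odd i then aB i./2 else aA i./2.
pose b := fun i => if odd i then bB i./2 else bA i./2.
have cov : A `|` B `<=` \bigcup_n box (a n) (b n).
  move=> x [/hA [n _ hn]|/hB [n _ hn]].
    by exists n.*2 => //; rewrite /a /b odd_double doubleK.
  by exists n.*2.+1 => //; rewrite /a /b /= odd_double /= uphalf_double.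
apply: (le_trans (@m_le _ _ _ cov)).
have -> : \sum_(0 <= n <oo) (boxvol (a n) (b n))%:E =
   \sum_(0 <= n <oo) (if odd n then (boxvol (aB n./2) (bB n./2))%:E else (boxvol (aA n./2) (bA n./2))%:E).
  by apply: eq_eseriesr => n _; rewrite /a /b; case: ifP.
apply: (le_trans (interleave_le (fun n => (boxvol (aA n) (bA n))%:E) (fun n => (boxvol (aB n) (bB n))%:E) _ _)); try by move=> n; rewrite lee_fin boxvol_ge0.
apply: le_trans (leeD (ltW hSA) (ltW hSB)) _.
rewrite addeACA -EFinD -splitr.
by rewrite -addeA [X in _ + X]addeC addeA.
Qed.
Definition cara (A : set V) := forall E, m (E `&` A) + m (E `&` ~` A) <= m E.

Lemma cara_meas (A : set V) : cara A -> leb_measurable A.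
Proof.
move=> h E; apply/le_anti; rewrite h andbT.
have -> : E = (E `&` A) `|` (E `&` ~` A) by rewrite -setIUr setUCr setIT.
rewrite -setIUr setUCr setIT -[X in m X](setIT E) -(setUCr A) setIUr.
exact: m_subadd.
Qed.

Lemma caraC (A : set V) : cara A -> cara (~` A).
Proof. by move=> h E; rewrite setCK addeC. Qed.

Lemma caraT : cara setT.
Proof. by move=> E; rewrite setIT setCT setI0 m0 adde0. Qed.

Lemma caraI (A B : set V) : cara A -> cara B -> cara (A `&` B).
Proof.
move=> hA hB E; apply: le_trans (hA E).
have -> : E `&` ~` (A `&` B) = (E `&` A `&` ~` B) `|` (E `&` ~` A).
  apply/seteqP; split=> x /=.
    move=> [Ex nAB]; have [hAx|hAx] := pselect (A x); last by right.
    by left; split => //; move=> hBx; exact: nAB.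
  by case=> [[[Ex _] nB]|[Ex nA]]; split=> // -[].
apply: le_trans (leeD (lexx _) (m_subadd _ _)) _.
rewrite addeA !setIA; apply: leeD; [exact: hB | exact: lexx].
Qed.

Lemma maxmin_split (a b t : R) :
  (Num.max (Num.min b t - a) 0 + Num.max (b - Num.max a t) 0 = Num.max (b - a) 0)%R.
Proof.
rewrite /Num.max /Num.min.
repeat case: ifP; move=> *; lra.
Qed.

End PartB.

Arguments cara {R d}. Arguments m_le {R d}. Arguments m_lb {R d}. Arguments m_ge0 {R d}.
Arguments m_mono {R d}. Arguments m_subadd {R d}. Arguments caraC {R d}. Arguments caraT {R d}.
Arguments caraI {R d}. Arguments cara_meas {R d}. Arguments boxvol_ge0 {R d}.
Section T.
Variables (R : realType) (d : nat).
Hypothesis hd : (0 < d)%N.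
Let m0 := @m0 R d hd.
Notation V := 'rV[R]_d.
Definition upd (x : V) (i : 'I_d) (v : R) : V := \row_j (if j == i then v else x ord0 j).
Lemma updE (x : V) i v j : upd x i v ord0 j = if j == i then v else x ord0 j.
Proof. by rewrite /upd mxE. Qed.
Arguments upd : simpl never.
Lemma boxvol_split (a b : V) i t :
  (boxvol a (upd b i (Num.min (b ord0 i) t)) + boxvol (upd a i (Num.max (a ord0 i) t)) b
   = boxvol a b)%R.
Proof.
rewrite /boxvol (bigD1 i) // [X in _ + X](bigD1 i) // [X in _ = X](bigD1 i) //.
rewrite !updE !eqxx.
have -> : (\prod_(j < d | j != i) Num.max (upd b i (Num.min (b ord0 i) t) ord0 j - a ord0 j) 0
   = \prod_(j < d | j != i) Num.max (b ord0 j - a ord0 j) 0)%R.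
  by apply: eq_bigr => j /negbTE ji; rewrite updE ji.
have -> : (\prod_(j < d | j != i) Num.max (b ord0 j - upd a i (Num.max (a ord0 i) t) ord0 j) 0
   = \prod_(j < d | j != i) Num.max (b ord0 j - a ord0 j) 0)%R.
  by apply: eq_bigr => j /negbTE ji; rewrite updE ji.
by rewrite -mulrDl maxmin_split.
Qed.
Notation m := (@leb_outer R d).
Local Open Scope ereal_scope.
Definition hs (i : 'I_d) (t : R) : set V := [set y | (y ord0 i < t)%R].

Lemma cara_hs i t : cara (hs i t).
Proof.
move=> E; apply: m_lb => a b cov.
pose b1 := fun n => upd (b n) i (Num.min (b n ord0 i) t).
pose a2 := fun n => upd (a n) i (Num.max (a n ord0 i) t).
have c1 : E `&` hs i t `<=` \bigcup_n box (a n) (b1 n).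
  move=> y [/cov [n _ hn] hy]; exists n => // j; rewrite /b1 updE.
  have := hn j; case: eqP => [->|_] //.
  by case/andP => -> /= yb; rewrite lt_min yb hy.
have c2 : E `&` ~` hs i t `<=` \bigcup_n box (a2 n) (b n).
  move=> y [/cov [n _ hn] hy]; exists n => // j; rewrite /a2 updE.
  have := hn j; case: eqP => [->|_] //.
  case/andP => ay -> ; rewrite andbT ge_max ay /=.
  by rewrite leNgt; apply/negP.
apply: le_trans (leeD (m_le _ _ _ c1) (m_le _ _ _ c2)) _.
rewrite -nneseriesD; last 2 first.
- by move=> n _ _; rewrite lee_fin boxvol_ge0.
- by move=> n _ _; rewrite lee_fin boxvol_ge0.
rewrite le_eqVlt; apply/orP; left; apply/eqP; apply: eq_eseriesr => n _.
by rewrite -EFinD /b1 /a2 boxvol_split.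
Qed.

Lemma cara_box (a b : V) : cara (box a b).
Proof.
have gen : forall s : seq 'I_d,
    cara [set y : V | forall j, j \in s -> (a ord0 j <= y ord0 j < b ord0 j)%R].
  elim=> [|i s IH].
    have -> : [set y : V | forall j, j \in [::] -> (a ord0 j <= y ord0 j < b ord0 j)%R] = setT.
      by apply/seteqP; split => // y _ j.
    exact: caraT.
  have -> : [set y : V | forall j, j \in i :: s -> (a ord0 j <= y ord0 j < b ord0 j)%R] =
     (~` hs i (a ord0 i)) `&` hs i (b ord0 i) `&`
       [set y : V | forall j, j \in s -> (a ord0 j <= y ord0 j < b ord0 j)%R].
    apply/seteqP; split => y /=.
      move=> h; have /andP[h1 h2] := h i (mem_head _ _); split; last first.
        by move=> j js; apply: h; rewrite in_cons js orbT.
      by split => //; apply/negP; rewrite -leNgt.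
    move=> [[h1 h2] h3] j; rewrite in_cons => /orP []; last exact: h3. move=> /eqP ->.
    by rewrite h2 andbT leNgt; apply/negP => hh; exact: h1.
  apply: caraI; last exact: IH.
  apply: caraI; [exact/caraC/cara_hs | exact: cara_hs].
have -> : box a b = [set y : V | forall j, j \in enum 'I_d -> (a ord0 j <= y ord0 j < b ord0 j)%R].
  apply/seteqP; split => y /= h j; first by move=> _; exact: h.
  by apply: h; rewrite mem_enum.
exact: gen.
Qed.

Definition aff (c : V) (l : R) (y : V) : V := c + l *: y.

Lemma affE c l y j : aff c l y ord0 j = (c ord0 j + l * y ord0 j)%R.
Proof. by rewrite /aff !mxE. Qed.

Lemma boxvol_aff c l (a b : V) : (0 < l)%R -> boxvol (aff c l a) (aff c l b) = (l ^+ d * boxvol a b)%R.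
Proof.
move=> l0; rewrite /boxvol.
have -> : (\prod_(i < d) Num.max (aff c l b ord0 i - aff c l a ord0 i) 0 =
    \prod_(i < d) (l * Num.max (b ord0 i - a ord0 i) 0))%R.
  apply: eq_bigr => i _; rewrite !affE maxr_pMr ?ltW // mulr0; congr Num.max.
  ring.
by rewrite big_split /= prodr_const card_ord.
Qed.

Lemma m_aff_le c l (A : set V) : (0 < l)%R -> m (aff c l @` A) <= (l ^+ d)%:E * m A.
Proof.
move=> l0; have ld : (0 < l ^+ d)%R by rewrite exprn_gt0.
rewrite -lee_pdivrMl //; apply: m_lb => a b cov; rewrite lee_pdivrMl //.
have cov' : aff c l @` A `<=` \bigcup_n box (aff c l (a n)) (aff c l (b n)).
  move=> _ [y /cov [n _ hn] <-]; exists n => // j; rewrite !affE.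
  by have /andP[h1 h2] := hn j; rewrite lerD2l ltrD2l ler_pM2l // ltr_pM2l // h1.
apply: le_trans (m_le _ _ _ cov') _.
rewrite -nneseriesZl; last by move=> n _; rewrite lee_fin boxvol_ge0.
rewrite le_eqVlt; apply/orP; left; apply/eqP; apply: eq_eseriesr => n _.
by rewrite boxvol_aff.
Qed.

Lemma m_aff c l (A : set V) : (0 < l)%R -> m (aff c l @` A) = (l ^+ d)%:E * m A.
Proof.
move=> l0; apply/le_anti; rewrite m_aff_le //=.
have li : (0 < l^-1)%R by rewrite invr_gt0.
have eA : A = aff (- (l^-1 *: c)) l^-1 @` (aff c l @` A).
  apply/seteqP; split => y.
    move=> Ay; exists (aff c l y); first by exists y.
    by rewrite /aff scalerDr scalerA mulVf ?gt_eqF // scale1r addKr.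
  move=> [_ [z Az <-] <-].
  by rewrite /aff scalerDr scalerA mulVf ?gt_eqF // scale1r addKr.
rewrite {1}eA -lee_pdivlMl ?exprn_gt0 // -exprVn.
exact: m_aff_le.
Qed.
End T.

Arguments cara {R d}. Arguments m_le {R d}. Arguments m_lb {R d}. Arguments m_ge0 {R d}.
Arguments m_mono {R d}. Arguments m_subadd {R d}. Arguments caraC {R d}. Arguments caraT {R d}.
Arguments caraI {R d}. Arguments cara_meas {R d}. Arguments boxvol_ge0 {R d}.
Arguments series_ub {R}.
Arguments cara_box {R d}. Arguments aff {R d}. Arguments affE {R d}. Arguments m_aff {R d}.
Section T2.
Variables (R : realType) (d : nat).
Hypothesis hd : (0 < d)%N.
Let m0 := @m0 R d hd.
Notation V := 'rV[R]_d.
Notation m := (@leb_outer R d).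

Definition cube (c : V) (t : R) : set V := box (c - const_mx t) (c + const_mx t).
Definition one : V := const_mx 1.
Definition u : \bar R := m (box 0 one).

Lemma boxvol01 : boxvol (0 : V) one = 1.
Proof. by rewrite /boxvol big1 // => i _; rewrite !mxE subr0 max_l ?ler01. Qed.
Local Open Scope ereal_scope.

Lemma u_le1 : u <= 1.
Proof.
pose b := fun n : nat => if n == 0%N then one else 0%R.
have cov : box 0 (one) `<=` \bigcup_n box ((fun _ => 0%R) n) (b n).
  by move=> y hy; exists 0%N.
apply: le_trans (m_le _ _ _ cov) _.
apply: series_ub => [n|N]; first by rewrite lee_fin boxvol_ge0.
case: N => [|N]; first by rewrite big_geq.
rewrite big_nat_recl // big1 ?adde0 /b /= ?boxvol01 // => i _.
by rewrite boxvol00.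
Qed.

Lemma u_ge0 : 0 <= u.
Proof. exact: m_ge0. Qed.

Lemma cube_aff c t : (0 < t)%R -> cube c t = aff (c - const_mx t) (2 * t) @` box 0 (one).
Proof.
move=> t0; apply/seteqP; split => y.
  move=> hy; exists ((2 * t)^-1 *: (y - (c - const_mx t))).
    move=> j; have := hy j; rewrite !mxE => /andP[h1 h2].
    rewrite pmulr_rge0 ?invr_gt0 ?mulr_gt0 //= subr_ge0 h1 /=.
    by rewrite ltr_pdivrMl ?mulr_gt0 // mulr1; lra.
  by rewrite /aff scalerA mulfV ?gt_eqF ?mulr_gt0 // scale1r addrC subrK.
move=> [z hz <-] j; rewrite affE; have := hz j; rewrite !mxE => /andP[h1 h2].
apply/andP; split.
  by rewrite lerDl mulr_ge0 // ?mulr_ge0 // ltW.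
have : (2 * t * z ord0 j < 2 * t)%R by rewrite -[X in (_ < X)%R]mulr1 ltr_pM2l ?mulr_gt0.
lra.
Qed.

Lemma m_cube c t : (0 < t)%R -> m (cube c t) = ((2 * t) ^+ d)%:E * u.
Proof. by move=> t0; rewrite cube_aff // m_aff // mulr_gt0. Qed.

Lemma cara_cube c t : cara (cube c t).
Proof. exact: cara_box. Qed.

Lemma in_bigU (f : nat -> set V) n x : (\big[setU/set0]_(0 <= k < n) f k) x ->
  exists2 k, (k < n)%N & f k x.
Proof.
elim: n => [|n IH]; first by rewrite big_geq.
rewrite big_nat_recr //= => -[/IH [k kn fk]|fx]; last by exists n.
by exists k => //; exact: ltnW.
Qed.

Lemma m_union_disj (f : nat -> set V) n :
  (forall k, cara (f k)) ->
  (forall k l, (k < n)%N -> (l < n)%N -> k <> l -> f k `&` f l = set0) ->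
  \sum_(0 <= k < n) m (f k) <= m (\big[setU/set0]_(0 <= k < n) f k).
Proof.
move=> hc; elim: n => [|n IH] hdis; first by rewrite !big_geq // m0.
rewrite !big_nat_recr //=.
set U := \big[setU/set0]_(0 <= k < n) f k.
have hU : U `&` f n = set0.
  apply/seteqP; split => // x [/in_bigU [k kn fk] fnx].
  have : (f k `&` f n) x by [].
  by rewrite hdis // => [|/eqP]; [exact: ltnW | rewrite ltn_eqF].
apply: le_trans (_ : m U + m (f n) <= _).
  apply: leeD => //; apply: IH => k l kn ln kl; apply: hdis => //; exact: ltnW.
have := hc n (U `|` f n).
have -> : (U `|` f n) `&` f n = f n by rewrite setIUl hU set0U setIid.
have -> : (U `|` f n) `&` ~` f n = U.
  rewrite setIUl setICr setU0; apply/seteqP; split=> x; first by case.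
  by move=> Ux; split => // fx; have : (U `&` f n) x by []; rewrite hU.
by rewrite addeC.
Qed.
End T2.

Arguments enorm_ge0 {R d}. Arguments enormB {R d}. Arguments enorm0 {R d}. Arguments coord_le {R d}.
Arguments enormD {R d}. Arguments enorm_tri {R d}. Arguments enorm_eq0 {R d}.
Section T3.
Variables (R : realType) (d : nat).
Hypothesis hd : (0 < d)%N.
Let small_coords := @small_coords R d hd.
Notation V := 'rV[R]_d.

Lemma trunc_close (x y : R) : 0 <= x -> 0 <= y -> Num.truncn x = Num.truncn y -> `|x - y| < 1.
Proof.
move=> x0 y0 e; have /andP[a1 a2] := truncn_itv x0; have /andP[b1 b2] := truncn_itv y0.
rewrite e in a1 a2; move: a1 a2 b1 b2; set q := (Num.truncn y)%:R.
rewrite (_ : (Num.truncn y).+1%:R = q + 1); last by rewrite -natr1.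
move=> *; rewrite ltr_norml; apply/andP; split; lra.
Qed.

Lemma pigeon (z : V) (R0 h : R) (M : nat) (F : nat -> V) (J : seq nat) :
  0 < h -> uniq J ->
  (forall k, k \in J -> forall i, `|F k ord0 i - z ord0 i| < R0) ->
  2 * R0 <= M%:R * h ->
  (forall k l, k \in J -> l \in J -> k != l -> exists i, h <= `|F k ord0 i - F l ord0 i|) ->
  (size J <= (M.+1) ^ d)%N.
Proof.
move=> h0 uJ hin hM hsep.
pose x := fun k (i : 'I_d) => (F k ord0 i - z ord0 i + R0) / h.
have x0 : forall k i, k \in J -> 0 <= x k i.
  move=> k i kJ; rewrite divr_ge0 ?ltW //.
  by have := hin k kJ i; rewrite ltr_norml => /andP[a _]; lra.
have xM : forall k i, k \in J -> (Num.truncn (x k i) < M.+1)%N.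
  move=> k i kJ; rewrite ltnS truncn_le_nat.
  rewrite ltr_pdivrMr //; have := hin k kJ i; rewrite ltr_norml => /andP[_ b].
  apply: lt_le_trans (_ : 2 * R0 <= _); first lra.
  by apply: le_trans hM _; rewrite ler_pM2r // ler_nat.
pose cell := fun k => ([ffun i : 'I_d => (inord (Num.truncn (x k i)) : 'I_M.+1)] : {ffun 'I_d -> 'I_M.+1}).
have inj : {in J &, injective cell}.
  move=> k l kJ lJ e; apply/eqP; apply/negPn/negP => kl.
  have [i hi] := hsep k l kJ lJ kl.
  have := congr1 (fun f : {ffun 'I_d -> 'I_M.+1} => val (f i)) e; rewrite /cell !ffunE /= !inordK ?xM // => et.
  have := trunc_close _ _ (x0 k i kJ) (x0 l i lJ) et.
  rewrite /x -mulrBl normrM (@gtr0_norm _ h^-1) ?invr_gt0 // ltr_pdivrMr // mul1r.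
  have -> : F k ord0 i - z ord0 i + R0 - (F l ord0 i - z ord0 i + R0) = F k ord0 i - F l ord0 i by ring.
  by rewrite ltNge hi.
have -> : (M.+1 ^ d = #|{ffun 'I_d -> 'I_M.+1}|)%N by rewrite card_ffun !card_ord.
rewrite -(size_map cell) cardE.
apply: uniq_leq_size; first by rewrite map_inj_in_uniq.
by move=> f _; rewrite mem_enum.
Qed.

Lemma sep_coord (a b : V) (dl : R) : 0 < dl -> dl <= enorm (a - b) ->
  exists i, dl / d%:R <= `|a ord0 i - b ord0 i|.
Proof.
move=> dl0 hab; apply/not_existsP => hn.
have : enorm (a - b) < d%:R * (dl / d%:R).
  apply: small_coords; first by rewrite divr_gt0 // ltr0n.
  by move=> i; rewrite !mxE ltNge; apply/negP => hi; apply: (hn i).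
rewrite mulrC divfK ?pnatr_eq0 -?lt0n //; lra.
Qed.


Definition sepl (dl : R) (P : seq V) := forall k l, (k < size P)%N -> (l < size P)%N -> k != l ->
  dl <= enorm (nth 0 P k - nth 0 P l).

Lemma sepl_rcons dl P y : sepl dl P -> (forall k, (k < size P)%N -> dl <= enorm (y - nth 0 P k)) ->
  sepl dl (rcons P y).
Proof.
move=> sP hy k l; rewrite size_rcons !nth_rcons !ltnS => kP lP kl.
have [kP'|kP'] := ltnP k (size P); have [lP'|lP'] := ltnP l (size P).
- exact: sP.
- have el : l = size P by apply/eqP; rewrite eqn_leq lP lP'.
  by rewrite el eqxx enormB; exact: hy.
- have ek : k = size P by apply/eqP; rewrite eqn_leq kP kP'.
  by rewrite ek eqxx; exact: hy.
- have el : l = size P by apply/eqP; rewrite eqn_leq lP lP'.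
  have ek : k = size P by apply/eqP; rewrite eqn_leq kP kP'.
  by move: kl; rewrite ek el eqxx.
Qed.

Lemma max_sep (X : set V) (dl : R) (Mb : nat) :
  (forall P : seq V, (forall k, (k < size P)%N -> X (nth 0 P k)) -> sepl dl P -> (size P <= Mb)%N) ->
  exists P : seq V, (forall k, (k < size P)%N -> X (nth 0 P k)) /\ sepl dl P /\
     forall y, X y -> exists2 k, (k < size P)%N & enorm (y - nth 0 P k) < dl.
Proof.
move=> hb.
pose Q := fun n => `[< exists P : seq V, size P = n /\ (forall k, (k < size P)%N -> X (nth 0 P k)) /\ sepl dl P >].
have ex : exists n, Q n by exists 0%N; apply/asboolP; exists [::]; split => //.
have ub : forall n, Q n -> (n <= Mb)%N.
  by move=> n /asboolP [P [<- [h1 h2]]]; exact: hb.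
case: (ex_maxnP ex ub) => n /asboolP [P [sz [inP sP]]] mx.
exists P; split => //; split => // y Xy.
case: (pselect (exists2 k, (k < size P)%N & enorm (y - nth 0 P k) < dl)) => // hn; exfalso.
have hk : forall k, (k < size P)%N -> dl <= enorm (y - nth 0 P k).
  by move=> k kP; rewrite leNgt; apply/negP => lt; apply: hn; exists k.
have : Q n.+1.
  apply/asboolP; exists (rcons P y); split; first by rewrite size_rcons sz.
  split; last exact: sepl_rcons.
  move=> k; rewrite size_rcons nth_rcons ltnS => kP.
  have [kP'|kP'] := ltnP k (size P); first exact: inP.
  have -> : k = size P by apply/eqP; rewrite eqn_leq kP kP'.
  by rewrite eqxx.
by move/mx; rewrite ltnn.
Qed.
End T3.

Arguments enorm_ge0 {R d}. Arguments enormB {R d}. Arguments enorm0 {R d}. Arguments coord_le {R d}.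
Arguments enormD {R d}. Arguments enorm_tri {R d}. Arguments enorm_eq0 {R d}.
Section T4.
Variables (R : realType) (d : nat).
Hypothesis hd : (0 < d)%N.
Notation V := 'rV[R]_d.

Lemma enorm_gt0 (x y : V) : x != y -> 0 < enorm (x - y).
Proof.
move=> xy; rewrite lt_def enorm_ge0 andbT; apply/negP => /eqP /enorm_eq0 /eqP.
by rewrite subr_eq0 (negbTE xy).
Qed.

Lemma Kfacts (phi : V -> V) : bilipschitz phi ->
  2 <= Kphi phi /\ forall x y, enorm (phi x - phi y) <= Kphi phi * enorm (x - y) /\
                               enorm (x - y) <= Kphi phi * enorm (phi x - phi y).
Proof.
move=> [L [L0 hL]].
set S := [set t | exists x y, x != y /\
     t = enorm (phi x - phi y) / enorm (x - y) + enorm (x - y) / enorm (phi x - phi y)].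
have pos : forall x y : V, x != y -> 0 < enorm (x - y) /\ 0 < enorm (phi x - phi y).
  move=> x y xy; have h1 := enorm_gt0 _ _ xy; split => //.
  have [_ h2] := hL x y; rewrite lt_def enorm_ge0 andbT; apply/negP => /eqP e.
  by move: h2; rewrite e mulr0; lra.
have ub : has_ubound S.
  exists (L + L) => _ [x [y [xy ->]]]; have [p1 p2] := pos x y xy.
  have [h1 h2] := hL x y.
  by apply: lerD; rewrite ler_pdivrMr.
have hS : forall t, S t -> t <= Kphi phi by move=> t St; exact: ub_le_sup.
have ge2 : forall a b : R, 0 < a -> 0 < b -> 2 <= a / b + b / a.
  move=> a b a0 b0.
  have -> : a / b + b / a = 2 + (a - b) ^+ 2 / (a * b) by field; rewrite ?gt_eqF.
  by rewrite lerDl divr_ge0 ?sqr_ge0 ?mulr_ge0 ?ltW.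
split.
  pose x : V := 0; pose y : V := const_mx 1.
  have xy : x != y.
    apply/eqP => /rowP /(_ (Ordinal hd)); rewrite !mxE => /eqP; rewrite eq_sym oner_eq0 //.
  apply: le_trans (hS _ _); last by exists x, y; split.
  by have [p1 p2] := pos x y xy; exact: ge2.
move=> x y; have [xy|nxy] := boolP (x != y); last by move: nxy; rewrite negbK => /eqP ->; rewrite !subrr enorm0 mulr0.
have [p1 p2] := pos x y xy.
have St := hS _ (ex_intro _ x (ex_intro _ y (conj xy erefl))).
split.
- rewrite -ler_pdivrMr //; apply: le_trans St; rewrite lerDl divr_ge0 // ltW //.
- rewrite -ler_pdivrMr //; apply: le_trans St; rewrite lerDr divr_ge0 // ltW //.
Qed.

End T4.

Theorem lemma1p1 (R : realType) (d : nat) (hd : (0 < d)%N) :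
  exists N : nat,
  forall a : R, 0 <= a <= 1 ->
  exists C : R -> R,
  forall phi : 'rV[R]_d -> 'rV[R]_d,
    bijective phi -> bilipschitz phi -> preserves_lebesgue phi ->
  forall (x0 : 'rV[R]_d) (r : R), 0 < r ->
  exists (I : set nat) (c : nat -> 'rV[R]_d) (s : nat -> R),
    (forall k, I k -> 0 < s k) /\
    (* (i) bounded covering of phi(B) by the doubled balls *)
    (phi @` eball x0 r `<=` \bigcup_(k in I) eball (c k) (2 * s k)) /\
    (forall (z : 'rV[R]_d) (J : seq nat), uniq J ->
        (forall k, k \in J -> I k /\ eball (c k) (2 * s k) z) ->
        (size J <= N)%N) /\
    (* (ii) pairwise disjoint *)
    (forall k l, I k -> I l -> k <> l -> eball (c k) (s k) `&` eball (c l) (s l) = set0) /\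
    (* (iii) *)
    (forall p : R, 1 <= p ->
      (((\esum_(k in I) (fine (leb_outer (eball (c k) (s k)))
                          * powR `|rho a (r / s k)| p)%:E)
         * (leb_outer (eball x0 r))^-1) `^ p^-1
       <= (C p * rho a (Kphi phi))%:E)%E).
Proof.
have d0 : (0 < d%:R :> R) by rewrite ltr0n.
exists ((2 * d).+1 ^ d)%N.
move=> a /andP[a0 a1].
exists (fun _ => (8 * d%:R ^+ 2) ^+ d).
move=> phi [g gK Kg] bl pres x0 r r0.
have [K2 Klip] := Kfacts R d hd phi bl.
set K := Kphi phi in K2 Klip *.
have K0 : 0 < K by lra.
pose s := r / K.
have s0 : 0 < s by rewrite divr_gt0.
have rs : r / s = K by rewrite /s divKf // gt_eqF.
pose X := phi @` eball x0 r.
pose h := 2 * s / d%:R.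
have h0 : 0 < h by rewrite /h divr_gt0 // mulr_gt0.
have [M hM] : exists M : nat, 2 * (K * r) <= M%:R * h.
  exists (Num.truncn (2 * (K * r) / h)).+1.
  rewrite -ler_pdivrMr //; apply: ltW.
  by have /andP[_ ->] := truncn_itv (divr_ge0 (mulr_ge0 (ler0n _ 2) (mulr_ge0 (ltW K0) (ltW r0))) (ltW h0)).
have hb : forall P : seq 'rV[R]_d, (forall k, (k < size P)%N -> X (nth 0 P k)) ->
    sepl R d (2 * s) P -> (size P <= M.+1 ^ d)%N.
  move=> P inP sP; rewrite -(size_iota 0 (size P)).
  apply: (pigeon R d (phi x0) (K * r) h M (nth 0 P)) => //.
  - exact: iota_uniq.
  - move=> k; rewrite mem_iota add0n => /andP[_ kP] i.
    have [y By <-] := inP k kP.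
    have := coord_le (phi y - phi x0) i; rewrite !mxE => hc; apply: le_lt_trans hc _.
    have [l1 _] := Klip y x0.
    apply: le_lt_trans l1 _; rewrite ltr_pM2l //.
  - move=> k l; rewrite !mem_iota !add0n => /andP[_ kP] /andP[_ lP] kl.
    have := sP k l kP lP kl => hs.
    have [i hi] := sep_coord R d hd _ _ _ (mulr_gt0 (ltr0n _ 2) s0) hs.
    by exists i.
have [P [inP [sP covP]]] := max_sep R d X (2 * s) _ hb.
pose n := size P.
pose c := fun k => nth 0 P k.
have disj : forall k l, (k < n)%N -> (l < n)%N -> k <> l -> eball (c k) s `&` eball (c l) s = set0.
  move=> k l kn ln kl; apply/seteqP; split => // w [h1 h2].
  have := sP k l kn ln (introN eqP kl).
  have := enorm_tri (c k) w (c l).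
  move: h1 h2; rewrite /eball /= (enormB (c k) w) => h1 h2; rewrite /c in h1 h2 *; lra.
exists `I_n, c, (fun _ => s).
split; first by move=> k _.
split.
  move=> _ [y By <-]; have [k kn hk] := covP (phi y) (ex_intro2 _ _ y By erefl).
  by exists k.
split.
  move=> z J uJ hJ.
  apply: (pigeon R d z (2 * s) h (2 * d) c J) => //.
  - move=> k kJ i; have [_ hz] := hJ k kJ.
    have := coord_le (c k - z) i; rewrite !mxE => hc; apply: le_lt_trans hc _; rewrite enormB.
    by move: hz; rewrite /eball.
  - have -> : (2 * d)%:R * h = 2 * (2 * s) by rewrite /h natrM; field; rewrite gt_eqF.
    exact: lexx.
  - move=> k l kJ lJ kl.
    have [kn _] := hJ k kJ; have [ln _] := hJ l lJ.
    have [i hi] := sep_coord R d hd _ _ _ (mulr_gt0 (ltr0n _ 2) s0) (sP k l kn ln kl).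
    by exists i.
split; first exact: disj.
move=> p p1.
have p0 : 0 < p by lra.
have ufin : u R d \is a fin_num.
  by rewrite ge0_fin_numE ?u_ge0 // (le_lt_trans (u_le1 R d hd)) ?ltry.
set fu := fine (u R d).
have uE : u R d = fu%:E by rewrite fineK.
have fu0 : 0 <= fu by rewrite -lee_fin -uE u_ge0.
have ball_cube : forall (c0 : 'rV[R]_d) (t : R), eball c0 t `<=` cube R d c0 t.
  move=> c0 t y hy j; have := coord_le (y - c0) j; rewrite !mxE => hc.
  have : `|y ord0 j - c0 ord0 j| < t by apply: le_lt_trans hc hy.
  rewrite ltr_norml => /andP[h1 h2]; apply/andP; split; lra.
have cube_ball : forall (c0 : 'rV[R]_d) (t : R), 0 < t -> cube R d c0 (t / (2 * d%:R)) `<=` eball c0 t.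
  move=> c0 t t0 y hy; rewrite /eball /=.
  have : enorm (y - c0) < d%:R * (t / d%:R).
    apply: (small_coords R d hd _ _ (divr_gt0 t0 d0)) => i.
    have := hy i; rewrite !mxE.
    have -> : t / (2 * d%:R) = (t / d%:R) / 2 by field; rewrite gt_eqF.
    have : 0 < t / d%:R by rewrite divr_gt0.
    move: (t / d%:R) => q q0 /andP[h1 h2]; rewrite ltr_norml; apply/andP; split; lra.
  by rewrite mulrC divfK ?gt_eqF.
have mcube : forall (c0 : 'rV[R]_d) (t : R), 0 < t -> leb_outer (cube R d c0 t) = ((2 * t) ^+ d * fu)%:E.
  by move=> c0 t t0; rewrite m_cube // uE.
have mball_le : forall (c0 : 'rV[R]_d) (t : R), 0 < t -> (leb_outer (eball c0 t) <= ((2 * t) ^+ d * fu)%:E)%E.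
  by move=> c0 t t0; rewrite -(mcube c0 t) //; apply: m_mono; exact: ball_cube.
have mball_ge : forall (c0 : 'rV[R]_d) (t : R), 0 < t -> (((t / d%:R) ^+ d * fu)%:E <= leb_outer (eball c0 t))%E.
  move=> c0 t t0; apply: le_trans (m_mono _ _ (cube_ball c0 t t0)).
  rewrite (mcube c0) ?divr_gt0 ?mulr_gt0 //.
  by have -> : 2 * (t / (2 * d%:R)) = t / d%:R by field; rewrite gt_eqF.
have mball_fin : forall (c0 : 'rV[R]_d) (t : R), 0 < t -> leb_outer (eball c0 t) \is a fin_num.
  move=> c0 t t0; rewrite ge0_fin_numE ?m_ge0 //.
  by apply: le_lt_trans (mball_le c0 t t0) _; exact: ltry.
have count : n%:R * ((s / d%:R) ^+ d * fu) <= (4 * r) ^+ d * fu.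
  pose Q := fun k => cube R d (c k) (s / (2 * d%:R)).
  have hQ : forall k, Q k `<=` eball (c k) s by move=> k; apply: cube_ball.
  have hdisQ : forall k l, (k < n)%N -> (l < n)%N -> k <> l -> Q k `&` Q l = set0.
    move=> k l kn ln kl; apply/seteqP; split => // w [q1 q2].
    have : (eball (c k) s `&` eball (c l) s) w by split; [exact: hQ | exact: hQ].
    by rewrite disj.
  have hsum := m_union_disj R d hd Q n (fun k => cara_cube R d hd _ _) hdisQ.
  have hsub : \big[setU/set0]_(0 <= k < n) Q k `<=` phi @` cube R d x0 (2 * r).
    move=> w /in_bigU [k kn qk]; have wB := hQ k w qk.
    have [y By ey] := inP k kn.
    exists (g w); last exact: Kg.
    have [_ l2] := Klip (g w) y.
    have hgy : enorm (g w - y) < r.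
      apply: le_lt_trans l2 _; rewrite Kg ey.
      have : K * enorm (w - c k) < K * s by rewrite ltr_pM2l.
      by have -> : K * s = r by rewrite /s mulrC divfK ?gt_eqF.
    move=> j; have := coord_le (g w - y) j; have := coord_le (y - x0) j; rewrite !mxE.
    move=> c1 c2.
    have e1 : `|y ord0 j - x0 ord0 j| < r by apply: le_lt_trans c1 By.
    have e2 : `|g w ord0 j - y ord0 j| < r by apply: le_lt_trans c2 hgy.
    move: e1 e2; rewrite !ltr_norml => /andP[e1 e1'] /andP[e2 e2'].
    apply/andP; split; lra.
  have hm := m_mono _ _ hsub.
  have mpres : leb_outer (phi @` cube R d x0 (2 * r)) = leb_outer (cube R d x0 (2 * r)).
    by apply: pres; apply: cara_meas; exact: cara_cube.
  rewrite mpres mcube ?mulr_gt0 // in hm.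
  have hs : (\sum_(0 <= k < n) leb_outer (Q k) = (n%:R * ((s / d%:R) ^+ d * fu))%:E)%E.
    rewrite (eq_bigr (fun _ => ((s / d%:R) ^+ d * fu)%:E)); last first.
      move=> k _; rewrite /Q mcube ?divr_gt0 ?mulr_gt0 //.
      by have -> : 2 * (s / (2 * d%:R)) = s / d%:R by field; rewrite gt_eqF.
    by rewrite sumEFin sumr_const_nat subn0 mulr_natl.
  rewrite -lee_fin -hs; apply: le_trans hsum _; apply: le_trans hm _.
  by have -> : 2 * (2 * r) = 4 * r by ring.
have rho0 : 0 <= rho a K.
  by rewrite /rho; case: ifP => _; [apply: ln_ge0; lra | exact: powR_ge0].
rewrite rs (ger0_norm rho0).
set Y := powR (rho a K) p.
have Y0 : 0 <= Y by exact: powR_ge0.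
rewrite esum_fset; last 2 first.
- exact: finite_II.
- by move=> i _; rewrite lee_fin mulr_ge0 // fine_ge0 // m_ge0.
rewrite -fsbig_ord sumEFin.
set Sr := (\sum_(k < n) _)%R.
have Sr0 : 0 <= Sr by apply: sumr_ge0 => k _; rewrite mulr_ge0 // fine_ge0 // m_ge0.
have Srle : Sr <= n%:R * ((2 * s) ^+ d * fu) * Y.
  apply: le_trans (_ : Sr <= \sum_(k < n) ((2 * s) ^+ d * fu * Y)) _.
    apply: ler_sum => k _; rewrite ler_wpM2r //.
    by rewrite -lee_fin fineK ?mball_fin //; exact: mball_le.
  rewrite sumr_const (_ : #|_| = n); last by rewrite cardT size_enum_ord.
  by rewrite -mulrnAl -mulr_natl.
rewrite -(fineK (mball_fin x0 r r0)).
set Dr := fine (leb_outer (eball x0 r)).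
have Drge : (r / d%:R) ^+ d * fu <= Dr by rewrite -lee_fin fineK ?mball_fin //; exact: mball_ge.
have Cst1 : 1 <= (8 * d%:R ^+ 2) ^+ d :> R.
  have h1 : 1 <= d%:R :> R by rewrite ler1n.
  have h8 : 1 <= 8 * d%:R ^+ 2 :> R by rewrite expr2; nra.
  exact: (exprn_ege1 d h8).
have [fu_0|fu_pos] := eqVneq fu 0.
  have -> : Sr = 0 by apply/le_anti; rewrite Sr0 andbT; move: Srle; rewrite fu_0 !mulr0 mul0r.
  rewrite mul0e poweR0r ?invr_neq0 ?gt_eqF // lee_fin mulr_ge0 //.
have fup : 0 < fu by rewrite lt_def fu_pos fu0.
have Dr0 : 0 < Dr by apply: lt_le_trans Drge; rewrite mulr_gt0 // exprn_gt0 // divr_gt0.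
rewrite inver gt_eqF // -EFinM poweR_EFin lee_fin.
set Cst := (8 * d%:R ^+ 2) ^+ d.
have e1 : (2 * s) ^+ d = (2 * d%:R) ^+ d * (s / d%:R) ^+ d.
  by rewrite -exprMn; congr (_ ^+ _); field; rewrite gt_eqF.
have e2 : (2 * d%:R) ^+ d * (4 * r) ^+ d = Cst * (r / d%:R) ^+ d.
  by rewrite /Cst -!exprMn; congr (_ ^+ _); field; rewrite gt_eqF.
have hh : n%:R * ((2 * s) ^+ d * fu) <= Cst * Dr.
  rewrite e1.
  have -> : n%:R * ((2 * d%:R) ^+ d * (s / d%:R) ^+ d * fu) =
      (2 * d%:R) ^+ d * (n%:R * ((s / d%:R) ^+ d * fu)) by ring.
  apply: le_trans (ler_wpM2l _ count) _; first by rewrite exprn_ge0 // mulr_ge0.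
  have -> : (2 * d%:R) ^+ d * ((4 * r) ^+ d * fu) = Cst * ((r / d%:R) ^+ d * fu).
    by rewrite mulrA e2 mulrA.
  by rewrite ler_wpM2l // (le_trans ler01 Cst1).
have q : Sr / Dr <= Cst * Y.
  rewrite ler_pdivrMr //; apply: le_trans Srle _.
  by rewrite mulrC [Cst * Y]mulrC -mulrA ler_wpM2l.
have pinv0 : 0 <= p^-1 by rewrite invr_ge0 ltW.
apply: le_trans (ge0_ler_powR pinv0 _ _ q) _.
- by rewrite nnegrE divr_ge0 // ltW.
- by rewrite nnegrE mulr_ge0 // (le_trans ler01 Cst1).
rewrite powRM ?(le_trans ler01 Cst1) //.
have -> : Y `^ p^-1 = rho a K by rewrite /Y -powRrM mulfV ?gt_eqF // powRr1.
rewrite ler_wpM2r //.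
apply: le_trans (ler_powR Cst1 (_ : p^-1 <= 1)) _.
  by rewrite invf_le1.
by rewrite powRr1 // (le_trans ler01 Cst1).
Qed.
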